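(* If $(a,b)\in R_0$, then $J(a,b)\ge 1/5$.
   Context: For $(a,b)\in\mathbb R^2$ define $f_{a,b}(x_1,x_2)=[b+a(x_1+x_2)+x_1x_2](2-x_1-x_2)$. Let $X_1=\{(x_1,x_2):-1\le x_1\le 0,\ -x_1\le x_2\le 1\}$ and $X_2=\{(x_1,x_2):-1\le x_1\le0,\ x_1\le x_2\le -x_1\}$. Let $\chi_{a,b}=\max_{X_1\cup X_2}f_{a,b}$, $m_{a,b}=\min_{X_1\cup X_2}f_{a,b}$, $R=\{(a,b)\in\mathbb R^2: m_{a,b}>0\}$, and for $(a,b)\in R$ let $J(a,b)=\frac{\chi_{a,b}-m_{a,b}}{\chi_{a,b}+m_{a,b}}$. Let $R_0=\{(a,b)\in R: b\le 2a\}$. *)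

(* Defs.v *)
From Stdlib Require Import Reals Lra.
Open Scope R_scope.

Definition fab (a b x1 x2 : R) : R :=
  (b + a * (x1 + x2) + x1 * x2) * (2 - x1 - x2).

Definition X1 (x1 x2 : R) : Prop := -1 <= x1 <= 0 /\ - x1 <= x2 <= 1.
Definition X2 (x1 x2 : R) : Prop := -1 <= x1 <= 0 /\ x1 <= x2 <= - x1.
Definition X12 (x1 x2 : R) : Prop := X1 x1 x2 \/ X2 x1 x2.

Definition IsMaxX12 (g : R -> R -> R) (M : R) : Prop :=
  (exists x1 x2, X12 x1 x2 /\ g x1 x2 = M) /\
  (forall x1 x2, X12 x1 x2 -> g x1 x2 <= M).

Definition IsMinX12 (g : R -> R -> R) (m : R) : Prop :=
  (exists x1 x2, X12 x1 x2 /\ g x1 x2 = m) /\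
  (forall x1 x2, X12 x1 x2 -> m <= g x1 x2).

Definition J (chi m : R) : R := (chi - m) / (chi + m).

(* Main.v *)
Require Import Defs.
From Stdlib Require Import Reals Lra.
Open Scope R_scope.

Theorem propositionA2 (a b chi m : R) :
  IsMaxX12 (fab a b) chi ->
  IsMinX12 (fab a b) m ->
  0 < m ->
  b <= 2 * a ->
  1 / 5 <= J chi m.
Proof.
  intros [_ Hmax] [_ Hmin] Hm Hb.
  assert (H00 : X12 0 0) by (right; unfold X2; lra).
  assert (H11 : X12 (-1) 1) by (left; unfold X1; lra).
  assert (Hmm : X12 (-1) (-1)) by (right; unfold X2; lra).
  pose proof (Hmax _ _ H00) as A. pose proof (Hmin _ _ H11) as B.
  pose proof (Hmin _ _ Hmm) as C. pose proof (Hmin _ _ H00) as D.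
  unfold fab in A, B, C, D.
  assert (K : 3 * m <= 2 * chi).
  { destruct (Rle_dec b 3); nra. }
  unfold J.
  assert (P : 0 < chi + m) by nra.
  replace ((chi - m) / (chi + m)) with (1/5 + (4*chi - 6*m) / (5*(chi+m))) by (field; lra).
  assert (0 <= (4*chi - 6*m) / (5*(chi+m))).
  { unfold Rdiv; apply Rmult_le_pos; [lra | left; apply Rinv_0_lt_compat; lra]. }
  lra.
Qed.
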